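(* Let $\mathbf{A}\in\mathbb{R}^{m\times n}$, $l=\min\{m,n\}$, $r=\mathrm{rank}(\mathbf{A})$, $\mu,\nu\in[0,\infty)$, and define $\lambda\in[0,\infty]$ by $\lambda^2=0$ if $\mu=0$; $\lambda^2=\mu^2/|\mathbf{A}\mathbf{A}^T|^\nu$ if $\mu>0$ and $|\mathbf{A}\mathbf{A}^T|^\nu>0$; and $\lambda^2=\infty$ if $\mu>0$ and $|\mathbf{A}\mathbf{A}^T|^\nu=0$. Let $\sigma_1\ge\cdots\ge\sigma_l\ge0$ be the singular values of $\mathbf{A}$. Then $\|\mathbf{A}^{*(\lambda)}\|\le\min\{M_1,M_2\}$, where $M_1=0$ if $\mathbf{A}=\mathbf{0}$ and $M_1=1/\sigma_r$ if $\mathbf{A}\neq\mathbf{0}$, and $M_2=\infty$ if $\mu=0$ and $M_2=\frac{1}{2\mu}\prod_{i=1}^l\sigma_i^\nu$ if $\mu>0$. Moreover, if $\mu>0$ then $\|\mathbf{A}^{*(\lambda)}\|\le\frac{1}{2\mu}\|\mathbf{A}\|^{\nu l}$.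
   Context: $|\cdot|$ denotes the determinant, with the convention $0^0=1$. $\|\cdot\|$ is the spectral norm. For $\lambda\in[0,\infty]$ the (extended) damped pseudoinverse is $\mathbf{A}^{*(\lambda)}=\mathbf{A}^T(\mathbf{A}\mathbf{A}^T+\lambda^2\mathbf{I}_m)^+$ if $\lambda<\infty$ and $\mathbf{A}^{*(\infty)}=\mathbf{0}\in\mathbb{R}^{n\times m}$, where ${}^+$ is the Moore–Penrose pseudoinverse. *)

(* Defs.v *)
From HB Require Import structures.
From Stdlib Require Import Reals Lra ClassicalEpsilon FunctionalExtensionality.
From mathcomp Require Import all_boot all_order all_algebra.

Set Implicit Arguments.
Unset Strict Implicit.
Unset Printing Implicit Defensive.

Definition R_eqb (x y : R) : bool := if Req_EM_T x y then true else false.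

Lemma R_eqP : Equality.axiom R_eqb.
Proof. move=> x y; rewrite /R_eqb; case: Req_EM_T => h; by constructor. Qed.

HB.instance Definition _ := hasDecEq.Build R R_eqP.

Definition R_find (P : pred R) (n : nat) : option R :=
  match excluded_middle_informative (exists x, P x) with
  | left h => Some (proj1_sig (constructive_indefinite_description _ h))
  | right _ => None
  end.

Lemma R_find_correct P n x : R_find P n = Some x -> P x.
Proof.
rewrite /R_find; case: excluded_middle_informative => // h [<-].
exact: proj2_sig (constructive_indefinite_description _ h).
Qed.

Lemma R_find_complete (P : pred R) : (exists x, P x) -> exists n, R_find P n.
Proof. move=> h; exists 0%N; rewrite /R_find; by case: excluded_middle_informative. Qed.

Lemma R_find_ext (P Q : pred R) : P =1 Q -> R_find P =1 R_find Q.
Proof. by move=> /functional_extensionality ->. Qed.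

HB.instance Definition _ :=
  hasChoice.Build R R_find_correct R_find_complete R_find_ext.

Lemma R_addA : associative Rplus. Proof. move=> *; ring. Qed.
Lemma R_addC : commutative Rplus. Proof. move=> *; ring. Qed.
Lemma R_add0 : left_id R0 Rplus. Proof. move=> *; ring. Qed.
Lemma R_addN : left_inverse R0 Ropp Rplus. Proof. move=> *; ring. Qed.

HB.instance Definition _ := GRing.isZmodule.Build R R_addA R_addC R_add0 R_addN.

Lemma R_mulA : associative Rmult. Proof. move=> *; ring. Qed.
Lemma R_mulC : commutative Rmult. Proof. move=> *; ring. Qed.
Lemma R_mul1 : left_id R1 Rmult. Proof. move=> *; ring. Qed.
Lemma R_mulDl : @left_distributive R R Rmult Rplus. Proof. move=> *; ring. Qed.
Lemma R_one_neq0 : R1 != R0. Proof. by apply/R_eqP; exact: R1_neq_R0. Qed.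

HB.instance Definition _ :=
  GRing.Zmodule_isComNzRing.Build R R_mulA R_mulC R_mul1 R_mulDl R_one_neq0.

Lemma R_mulVf (x : R) : x != (0 : R)%R -> GRing.mul (Rinv x) x = (1 : R)%R.
Proof. move=> /R_eqP h; exact: Rinv_l. Qed.
Lemma R_inv0 : Rinv (0 : R)%R = (0 : R)%R. Proof. exact: Rinv_0. Qed.

HB.instance Definition _ := GRing.ComNzRing_isField.Build R R_mulVf R_inv0.

Local Open Scope ring_scope.

(* real power x^y for x >= 0, y >= 0, with the convention 0^0 = 1
   (and 0^y = 0 for y > 0). *)
Definition rpow (x y : R) : R :=
  if x == 0 then (if y == 0 then 1 else 0) else Rpower x y.

Definition vnorm n (x : 'cV[R]_n) : R := sqrt (\sum_(i < n) x i 0 ^+ 2).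

Definition spec_norm m n (B : 'M[R]_(m, n)) : R :=
  epsilon (inhabits R0)
    (is_lub (fun c => exists x : 'cV[R]_n,
                 Rle (vnorm x) R1 /\ c = vnorm (B *m x))).

(* Moore-Penrose pseudoinverse: the unique X satisfying the Penrose equations *)
Definition penrose m n (M : 'M[R]_(m, n)) (X : 'M[R]_(n, m)) : Prop :=
  [/\ M *m X *m M = M, X *m M *m X = X,
      (M *m X)^T = M *m X & (X *m M)^T = X *m M].

Definition pinv m n (M : 'M[R]_(m, n)) : 'M[R]_(n, m) :=
  epsilon (inhabits 0) (penrose M).

Inductive extR := Fin of R | Inf.

Definition damped_pinv m n (A : 'M[R]_(m, n)) (lam : extR) : 'M[R]_(n, m) :=
  match lam with
  | Fin l => A^T *m pinv (A *m A^T + (l ^+ 2)%:M)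
  | Inf => 0
  end.

Definition lambda_of m n (A : 'M[R]_(m, n)) (mu nu : R) : extR :=
  let d := rpow (\det (A *m A^T)) nu in
  if mu == 0 then Fin 0
  else if Rlt_dec R0 d then Fin (sqrt (Rdiv (mu ^+ 2) d))
  else Inf.

(* sigma (indexed 0 .. l-1, l = minn m n) is the sequence of singular values of
   A: nonnegative, nonincreasing, and A = U diag(sigma) V^T with U, V orthogonal. *)
Definition singular_values m n (A : 'M[R]_(m, n)) (sigma : nat -> R) : Prop :=
  [/\ forall i, (i < minn m n)%N -> Rle 0 (sigma i),
      forall i j, (i <= j)%N -> (j < minn m n)%N -> Rle (sigma j) (sigma i)
    & exists (U : 'M[R]_m) (V : 'M[R]_n),
        [/\ U^T *m U = 1%:M, V^T *m V = 1%:M &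
            A = U *m (\matrix_(i < m, j < n)
                        if (i : nat) == j then sigma i else 0) *m V^T]].

(* Main.v *)
Require Import Defs.
From HB Require Import structures.
From Stdlib Require Import Reals Lra ClassicalEpsilon.
From mathcomp Require Import all_boot all_order all_algebra.
Local Open Scope ring_scope.
Import GRing.Theory.
Set Implicit Arguments.
Unset Strict Implicit.

Lemma addRE (x y : R) : x + y = Rplus x y. Proof. by []. Qed.
Lemma mulRE (x y : R) : x * y = Rmult x y. Proof. by []. Qed.
Lemma oppRE (x : R) : - x = Ropp x. Proof. by []. Qed.
Lemma invRE (x : R) : x^-1 = Rinv x. Proof. by []. Qed.
Lemma zeroRE : (0 : R) = R0. Proof. by []. Qed.
Lemma oneRE : (1 : R) = R1. Proof. by []. Qed.
Lemma twoRE : (2 : R) = Rplus R1 R1. Proof. by []. Qed.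
Ltac toR := rewrite ?twoRE; repeat match goal with
  | |- context[@GRing.zero ?T] => change (@GRing.zero T) with R0
  | |- context[@GRing.one ?T] => change (@GRing.one T) with R1
  | |- context[@GRing.add ?T ?x ?y] => change (@GRing.add T x y) with (Rplus x y)
  | |- context[@GRing.mul ?T ?x ?y] => change (@GRing.mul T x y) with (Rmult x y)
  | |- context[@GRing.opp ?T ?x] => change (@GRing.opp T x) with (Ropp x)
  | |- context[@GRing.inv ?T ?x] => change (@GRing.inv T x) with (Rinv x)
  end.

Lemma test (x : R) : Rle 0 x -> Rle 0 (x * x + 2 * x).
Proof. move=> h. toR. nra. Qed.

Lemma Rle_sum (I : finType) (F G : I -> R) :
  (forall i, Rle (F i) (G i)) -> Rle (\sum_i F i) (\sum_i G i).
Proof.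
move=> h; apply: (big_ind2 (fun a b => Rle a b)) => //.
  toR; lra.
move=> *; toR; lra.
Qed.

Lemma Rle_sum0 (I : finType) (F : I -> R) :
  (forall i, Rle 0 (F i)) -> Rle 0 (\sum_i F i).
Proof.
move=> h; apply: (big_ind (fun a => Rle 0 a)) => //.
  toR; lra.
move=> *; toR; lra.
Qed.

Lemma single_nz (I : finType) (F : I -> R) :
  (forall i k, i != k -> F i * F k = 0) ->
  (forall i, F i = 0) \/ exists i0, forall k, k != i0 -> F k = 0.
Proof.
move=> H; case: (pickP (fun i => F i != 0)) => [i0 h0|h].
  right; exists i0 => k hk; have := H k i0 hk; move/eqP.
  by rewrite mulf_eq0 (negbTE h0) orbF => /eqP.
left => i; have := h i; by move/negbFE/eqP.
Qed.

Lemma sum_sq_single (I : finType) (F : I -> R) :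
  (forall i k, i != k -> F i * F k = 0) ->
  (\sum_i F i) ^+ 2 = \sum_i F i ^+ 2.
Proof.
move=> H; case: (@single_nz _ _ H) => [h|[i0 h]].
  by rewrite !big1 ?expr0n // => i _; rewrite h // expr0n.
rewrite (bigD1 i0) //= big1 ?addr0; last by move=> i /h.
rewrite (bigD1 i0) //= big1 ?addr0 //; move=> i /h ->; by rewrite expr0n.
Qed.

Lemma sum_le_single (I : finType) (F : I -> R) c :
  (forall i k, i != k -> F i * F k = 0) -> Rle 0 c ->
  (forall i, Rle (F i) c) -> Rle (\sum_i F i) c.
Proof.
move=> H c0 hc; case: (@single_nz _ _ H) => [h|[i0 h]].
  by rewrite big1 // => i _; rewrite h.
by rewrite (bigD1 i0) //= big1 ?addr0 //; move=> i /h.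
Qed.
Definition rdiag p q (a : nat -> R) : 'M[R]_(p, q) :=
  \matrix_(i < p, j < q) if (i : nat) == j then a i else 0.

Lemma rdiag_tr p q a : (rdiag p q a)^T = rdiag q p a.
Proof.
apply/matrixP => i j; rewrite !mxE eq_sym.
by case: eqP => // ->.
Qed.

Lemma rdiag_ext p q a b : (forall i, (i < minn p q)%N -> a i = b i) ->
  rdiag p q a = rdiag p q b.
Proof.
move=> h; apply/matrixP => i j; rewrite !mxE; case: eqP => // e.
apply: h; rewrite leq_min ltn_ord /= e ltn_ord //.
Qed.

Lemma rdiag_mul p q s a b :
  rdiag p q a *m rdiag q s b = rdiag p s (fun i => if (i < q)%N then a i * b i else 0).
Proof.
apply/matrixP => i k; rewrite !mxE.
case: (ltnP i q) => iq.
  rewrite (bigD1 (Ordinal iq)) //= big1 ?addr0.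
    rewrite !mxE /= eqxx; case: eqP => _; [by []| by rewrite mulr0].
  move=> j /eqP hj; rewrite !mxE; case: eqP => e; last by rewrite mul0r.
  by exfalso; apply: hj; apply: val_inj; rewrite /= e.
rewrite big1; first by case: eqP.
move=> j _; rewrite !mxE; case: eqP => e; last by rewrite mul0r.
by move: (ltn_ord j); rewrite -e ltnNge iq.
Qed.

Lemma rdiag_add p a b : rdiag p p a + rdiag p p b = rdiag p p (fun i => a i + b i).
Proof. apply/matrixP => i j; rewrite !mxE; case: eqP => //; by rewrite addr0. Qed.

Lemma scalar_rdiag p c : c%:M = rdiag p p (fun _ => c).
Proof. apply/matrixP => i j; rewrite !mxE; case: (i =P j) => [->|h]; rewrite ?eqxx //.
case: eqP => // e; exfalso; apply: h; exact: val_inj. Qed.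

Lemma det_rdiag p a : \det (rdiag p p a) = \prod_(i < p) a i.
Proof.
have -> : rdiag p p a = diag_mx (\row_(i < p) a i).
  apply/matrixP => i j; rewrite !mxE; case: (i =P j) => [->|h]; rewrite ?eqxx ?mxE //.
  case: eqP => // e; exfalso; apply: h; exact: val_inj.
rewrite det_diag; apply: eq_bigr => i _; by rewrite mxE.
Qed.

Lemma sumsq_tr n (x : 'cV[R]_n) : \sum_(i < n) x i 0 ^+ 2 = (x^T *m x) 0 0.
Proof. rewrite !mxE; apply: eq_bigr => i _; by rewrite !mxE expr2. Qed.

Lemma vnorm_orth n (Q : 'M[R]_n) x : Q^T *m Q = 1%:M -> vnorm (Q *m x) = vnorm x.
Proof.
move=> h; rewrite /vnorm !sumsq_tr trmx_mul -mulmxA (mulmxA Q^T) h mul1mx //.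
Qed.

Lemma orth_tr n (Q : 'M[R]_n) : Q^T *m Q = 1%:M -> Q^T^T *m Q^T = 1%:M.
Proof. by rewrite trmxK => /mulmx1C. Qed.

Lemma sumsq_ge0 n (x : 'cV[R]_n) : Rle 0 (\sum_(i < n) x i 0 ^+ 2).
Proof. apply: Rle_sum0 => i; rewrite expr2; toR; nra. Qed.

Lemma vnorm_ge0 n (x : 'cV[R]_n) : Rle 0 (vnorm x).
Proof. exact: sqrt_pos. Qed.

Lemma rdiag_bound p q (e : nat -> R) c (x : 'cV[R]_q) :
  Rle 0 c -> (forall k, (k < minn p q)%N -> Rle (e k * e k) (c * c)) ->
  Rle (vnorm (rdiag p q e *m x)) (Rmult c (vnorm x)).
Proof.
move=> c0 he.
set E := rdiag p q e.
have rowE : forall i : 'I_p, (E *m x) i 0 ^+ 2 = \sum_j (E i j * x j 0) ^+ 2.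
  move=> i; rewrite mxE sum_sq_single // => j k jk.
  rewrite !mxE; case: eqP => e1; last by rewrite !mul0r.
  case: eqP => e2; last by rewrite mul0r mulr0.
  by exfalso; move/eqP: jk; apply; apply: val_inj; rewrite /= -e1 -e2.
have colE : forall j : 'I_q, Rle (\sum_(i < p) E i j ^+ 2) (c * c).
  move=> j; apply: sum_le_single.
  - move=> i k ik; rewrite !mxE; case: eqP => e1; last by rewrite expr0n mul0r.
    case: eqP => e2; last by rewrite expr0n mulr0.
    by exfalso; move/eqP: ik; apply; apply: val_inj; rewrite /= e1 e2.
  - toR; nra.
  - move=> i; rewrite !mxE; case: eqP => e1.
      rewrite expr2; apply: he; rewrite leq_min ltn_ord e1 ltn_ord //.
    rewrite expr2 mul0r; toR; nra.
have key : Rle (\sum_(i < p) (E *m x) i 0 ^+ 2) (c * c * \sum_(j < q) x j 0 ^+ 2).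
  under eq_bigr => i _ do rewrite rowE.
  rewrite exchange_big /=.
  rewrite -[Rmult (Rmult c c) _]/(GRing.mul (Rmult c c) _) mulr_sumr.
  apply: Rle_sum => j.
  under eq_bigr => i _ do rewrite exprMn.
  rewrite -mulr_suml.
  have := colE j.
  have hx : Rle 0 (x j 0 ^+ 2) by rewrite expr2; toR; nra.
  move: (\sum_(i < p) E i j ^+ 2) hx => s hx hs.
  have := Rmult_le_compat_r _ _ _ hx hs; rewrite !expr2; toR; lra.
rewrite /vnorm -(sqrt_square c) //; toR.
rewrite -sqrt_mult; [|nra|exact: sumsq_ge0].
apply: sqrt_le_1_alt; exact: key.
Qed.

Lemma vnorm0 n : vnorm (0 : 'cV[R]_n) = R0.
Proof. rewrite /vnorm big1 ?sqrt_0 // => i _; by rewrite mxE expr2 mul0r. Qed.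

Lemma spec_norm_lub m n (B : 'M[R]_(m, n)) c :
  (forall x : 'cV_n, Rle (vnorm x) R1 -> Rle (vnorm (B *m x)) c) ->
  is_lub (fun c => exists x : 'cV[R]_n, Rle (vnorm x) R1 /\ c = vnorm (B *m x))
    (spec_norm B).
Proof.
move=> hc; rewrite /spec_norm; apply: epsilon_spec.
have hb : bound (fun c => exists x : 'cV[R]_n, Rle (vnorm x) R1 /\ c = vnorm (B *m x)).
  by exists c => y [x [hx ->]]; apply: hc.
have hne : exists y, (fun c => exists x : 'cV[R]_n, Rle (vnorm x) R1 /\ c = vnorm (B *m x)) y.
  exists (vnorm (B *m 0)); exists 0; split => //; rewrite vnorm0; lra.
have [l hl] := completeness _ hb hne; by exists l.
Qed.

Lemma spec_norm_le m n (B : 'M[R]_(m, n)) c :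
  (forall x : 'cV_n, Rle (vnorm x) R1 -> Rle (vnorm (B *m x)) c) ->
  Rle (spec_norm B) c.
Proof.
move=> hc; have [_ h] := spec_norm_lub hc; apply: h => y [x [hx ->]]; exact: hc.
Qed.

Lemma spec_norm_ge m n (B : 'M[R]_(m, n)) c (x : 'cV_n) :
  (forall x : 'cV_n, Rle (vnorm x) R1 -> Rle (vnorm (B *m x)) c) ->
  Rle (vnorm x) R1 -> Rle (vnorm (B *m x)) (spec_norm B).
Proof.
move=> hc hx; have [h _] := spec_norm_lub hc; apply: h; by exists x.
Qed.

Lemma orth_rdiag_bound m n (U : 'M[R]_m) (V : 'M[R]_n) e c :
  U^T *m U = 1%:M -> V^T *m V = 1%:M -> Rle 0 c ->
  (forall k, (k < minn m n)%N -> Rle (e k * e k) (c * c)) ->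
  forall x : 'cV_n, Rle (vnorm x) R1 ->
    Rle (vnorm (U *m rdiag m n e *m V^T *m x)) c.
Proof.
move=> hU hV c0 he x hx.
rewrite -!mulmxA vnorm_orth //.
apply: Rle_trans (rdiag_bound _ c0 he) _.
rewrite vnorm_orth; last exact: orth_tr.
have := vnorm_ge0 x; nra.
Qed.

Lemma penrose_uniq m n (M : 'M[R]_(m, n)) X Y : penrose M X -> penrose M Y -> X = Y.
Proof.
case=> MXM XMX MXs XMs [MYM YMY MYs YMs].
have hMt1 : M^T = M^T *m M *m Y.
  by rewrite -{1}MYM trmx_mul MYs mulmxA.
have hMt2 : M^T = X *m M *m M^T.
  by rewrite -{1}MXM -[M *m X *m M]mulmxA trmx_mul XMs.
have eX : X = X *m M *m Y.
  transitivity (X *m (M *m X)^T); first by rewrite MXs mulmxA XMX.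
  transitivity (X *m X^T *m M^T); first by rewrite trmx_mul mulmxA.
  by rewrite hMt1 !mulmxA -(mulmxA X X^T) -trmx_mul MXs mulmxA XMX.
have eY : Y = X *m M *m Y.
  transitivity ((Y *m M)^T *m Y); first by rewrite YMs YMY.
  transitivity (M^T *m Y^T *m Y); first by rewrite trmx_mul.
  rewrite hMt2 -!mulmxA (mulmxA M^T) -trmx_mul YMs YMY //.
by rewrite eX -eY.
Qed.

Lemma pinv_eq m n (M : 'M[R]_(m, n)) X : penrose M X -> pinv M = X.
Proof.
move=> hX; apply: (@penrose_uniq _ _ M) => //.
rewrite /pinv; apply: epsilon_spec; by exists X.
Qed.

Lemma rdiag_mulsq p a b : rdiag p p a *m rdiag p p b = rdiag p p (fun i => a i * b i).
Proof. rewrite rdiag_mul; apply: rdiag_ext => i; rewrite minnn => ->. done. Qed.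

Lemma conjM m (U : 'M[R]_m) (A B : 'M[R]_m) : U^T *m U = 1%:M ->
  (U *m A *m U^T) *m (U *m B *m U^T) = U *m (A *m B) *m U^T.
Proof. by move=> hU; rewrite -!mulmxA (mulmxA U^T U) hU mul1mx. Qed.

Lemma conjT m (U : 'M[R]_m) (A : 'M[R]_m) : (U *m A *m U^T)^T = U *m A^T *m U^T.
Proof. by rewrite !trmx_mul trmxK mulmxA. Qed.

Lemma pinv_orth_rdiag m (U : 'M[R]_m) d : U^T *m U = 1%:M ->
  pinv (U *m rdiag m m d *m U^T) = U *m rdiag m m (fun i => (d i)^-1) *m U^T.
Proof.
move=> hU; apply: pinv_eq; split.
- rewrite !conjM // !rdiag_mulsq; congr (_ *m _ *m _); apply: rdiag_ext => i _.
  case: (d i =P 0) => [->|h]; first by rewrite !mul0r.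
  by rewrite mulfV ?mul1r //; apply/eqP.
- rewrite !conjM // !rdiag_mulsq; congr (_ *m _ *m _); apply: rdiag_ext => i _.
  case: (d i =P 0) => [->|h]; first by rewrite invr0 !mul0r.
  by rewrite mulVf ?mul1r //; apply/eqP.
- by rewrite conjM // conjT rdiag_mulsq rdiag_tr.
- by rewrite conjM // conjT rdiag_mulsq rdiag_tr.
Qed.

Lemma mxrank_unitl m n (P : 'M[R]_m) (B : 'M[R]_(m, n)) :
  P \in unitmx -> \rank (P *m B) = \rank B.
Proof.
move=> hP; rewrite -mxrank_tr trmx_mul mxrankMfree ?mxrank_tr //.
by rewrite row_free_unit unitmx_tr.
Qed.

Lemma rank_rdiag m n (s : nat -> R) p : (p <= minn m n)%N ->
  (forall k, (k < p)%N -> s k != 0) ->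
  (forall k, (p <= k)%N -> (k < minn m n)%N -> s k = 0) ->
  \rank (rdiag m n s) = p.
Proof.
move=> hp hnz hz.
pose w := \row_(i < m) (if (i < p)%N then s i else 1).
have -> : rdiag m n s = diag_mx w *m pid_mx p.
  apply/matrixP => i j; rewrite mul_diag_mx !mxE.
  case: eqP => e /=; last by rewrite mulr0.
  case: ltnP => ip; first by rewrite mulr1.
  rewrite mulr0 hz //; rewrite leq_min ltn_ord e ltn_ord //.
have hw : diag_mx w \in unitmx.
  rewrite unitmxE det_diag unitfE; apply/prodf_neq0 => i _; rewrite mxE.
  case: ltnP => ip; [exact: hnz | exact: oner_neq0].
move: hp; rewrite leq_min => /andP [hm hn].
by rewrite mxrank_unitl // rank_pid_mx.
Qed.

Section SVD.
Variables (m n : nat) (U : 'M[R]_m) (V : 'M[R]_n) (s : nat -> R).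
Hypotheses (hU : U^T *m U = 1%:M) (hV : V^T *m V = 1%:M).
Let S := rdiag m n s.

Lemma svd_tr : (U *m S *m V^T)^T = V *m rdiag n m s *m U^T.
Proof. by rewrite !trmx_mul trmxK rdiag_tr mulmxA. Qed.

Definition gsq i := if (i < n)%N then s i * s i else 0.

Lemma svd_AAt : (U *m S *m V^T) *m (U *m S *m V^T)^T = U *m rdiag m m gsq *m U^T.
Proof.
rewrite svd_tr -!mulmxA (mulmxA V^T V) hV mul1mx !mulmxA -(mulmxA U) rdiag_mul //.
Qed.

Lemma svd_damped c :
  (U *m S *m V^T)^T *m pinv ((U *m S *m V^T) *m (U *m S *m V^T)^T + c%:M)
  = V *m rdiag n m (fun i => if (i < m)%N then s i * (gsq i + c)^-1 else 0) *m U^T.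
Proof.
have hUU : U *m U^T = 1%:M by apply: mulmx1C.
have -> : (c%:M : 'M[R]_m) = U *m rdiag m m (fun _ => c) *m U^T.
  by rewrite -scalar_rdiag scalar_mxC -mulmxA hUU mulmx1.
rewrite svd_AAt -mulmxDl -mulmxDr rdiag_add pinv_orth_rdiag // svd_tr.
rewrite -!mulmxA (mulmxA U^T U) hU mul1mx !mulmxA -(mulmxA V) rdiag_mul //.
Qed.

Lemma svd_det : \det ((U *m S *m V^T) *m (U *m S *m V^T)^T) = \prod_(i < m) gsq i.
Proof.
have h1 : \det U * \det U = 1 by rewrite -{1}det_tr -det_mulmx hU det1.
by rewrite svd_AAt !det_mulmx det_rdiag det_tr mulrAC h1 mul1r.
Qed.

End SVD.

Section RealFacts.
Local Open Scope R_scope.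

Lemma eqR_true (x : R) : (x == x) = true.
Proof. exact: eqxx. Qed.

Lemma rpow_ge0 x y : 0 <= rpow x y.
Proof.
rewrite /rpow; case: (x =P GRing.zero) => _; last by left; apply: exp_pos.
case: (y =P GRing.zero) => _; toR; lra.
Qed.

Lemma rpow_nz x y : x <> 0 -> rpow x y = Rpower x y.
Proof. move=> h; rewrite /rpow; case: (x =P GRing.zero) => // e; by exfalso. Qed.

Lemma rpow_y0 x : rpow x 0 = 1.
Proof.
rewrite /rpow; case: (x =P GRing.zero) => _.
  case: (IZR Z0 =P GRing.zero) => // h; by exfalso; apply h.
by rewrite /Rpower Rmult_0_l exp_0.
Qed.

Lemma rpow_0x y : y <> 0 -> rpow 0 y = 0.
Proof.
move=> h; rewrite /rpow; case: (IZR Z0 =P GRing.zero) => [_|h0]; last by exfalso; apply h0.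
by case: (y =P GRing.zero).
Qed.

Lemma rpow_mono a b y : 0 <= a -> a <= b -> 0 <= y -> rpow a y <= rpow b y.
Proof.
move=> a0 ab y0.
case: (Req_dec y 0) => [->|yn]; first by rewrite !rpow_y0; lra.
case: (Req_dec a 0) => [->|an].
  rewrite rpow_0x //; exact: rpow_ge0.
rewrite !rpow_nz; try lra.
apply: Rle_Rpower_l => //; lra.
Qed.

Lemma Rpower_1x y : Rpower 1 y = 1.
Proof. by rewrite /Rpower ln_1 Rmult_0_r exp_0. Qed.

Lemma entry_ge0 s L : 0 <= s -> 0 <= L -> 0 <= s * / (s * s + L).
Proof.
move=> s0 L0; case: (Req_dec (s * s + L) 0) => [->|h].
  rewrite Rinv_0; lra.
apply: Rmult_le_pos => //; left; apply: Rinv_0_lt_compat; nra.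
Qed.

Lemma entry_le_inv s L : 0 < s -> 0 <= L -> s * / (s * s + L) <= / s.
Proof.
move=> s0 L0.
have h : 0 < s * s + L by nra.
apply: (Rmult_le_reg_r (s * (s * s + L))); first nra.
have -> : s * / (s * s + L) * (s * (s * s + L)) = s * s by field; lra.
have -> : / s * (s * (s * s + L)) = s * s + L by field; lra.
lra.
Qed.

Lemma entry_le_half s t : 0 <= s -> 0 < t -> s * / (s * s + t * t) <= / (2 * t).
Proof.
move=> s0 t0.
have h : 0 < s * s + t * t by nra.
apply: (Rmult_le_reg_r (2 * t * (s * s + t * t))); first nra.
have -> : s * / (s * s + t * t) * (2 * t * (s * s + t * t)) = 2 * t * s by field; lra.
have -> : / (2 * t) * (2 * t * (s * s + t * t)) = s * s + t * t by field; lra.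
have := Rle_0_sqr (s - t); rewrite /Rsqr; nra.
Qed.

End RealFacts.

Lemma sq_le a b : Rle 0 a -> Rle a b -> Rle (a * a) (b * b).
Proof. move=> *; toR; nra. Qed.

Lemma exprE (x : R) k : x ^+ k = pow x k.
Proof. elim: k => [|k IH]; by rewrite ?expr0 // exprS IH. Qed.

Lemma Rpower_prod k (F : 'I_k -> R) y : (forall i, Rlt 0 (F i)) ->
  Rpower (\prod_i F i) y = \prod_i Rpower (F i) y.
Proof.
move=> h.
suff [] : Rlt 0 (\prod_i F i) /\ Rpower (\prod_i F i) y = \prod_i Rpower (F i) y by [].
apply: (big_ind2 (fun a b => Rlt 0 a /\ Rpower a y = b)).
- split; [toR; lra | exact: Rpower_1x].
- move=> a b c d [a0 <-] [c0 <-]; split; first by toR; nra.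
  by toR; rewrite Rpower_mult_distr.
- move=> i _; split => //.
Qed.

Lemma prod_le k (F G : 'I_k -> R) : (forall i, Rle 0 (F i) /\ Rle (F i) (G i)) ->
  Rle (\prod_i F i) (\prod_i G i).
Proof.
move=> h.
suff [] : Rle 0 (\prod_i F i) /\ Rle (\prod_i F i) (\prod_i G i) by [].
apply: (big_ind2 (fun a b => Rle 0 a /\ Rle a b)).
- split; toR; lra.
- move=> a b c d [a0 ab] [c0 cd]; toR; split; first nra.
  apply: Rmult_le_compat => //.
- move=> i _; exact: h.
Qed.

Lemma prod_ge0 k (F : 'I_k -> R) : (forall i, Rle 0 (F i)) -> Rle 0 (\prod_i F i).
Proof.
move=> h; apply: (big_ind (fun a => Rle 0 a)) => //; first by toR; lra.
move=> a b a0 b0; toR; nra.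
Qed.

Lemma prod_const k (c : R) : \prod_(i < k) c = c ^+ k.
Proof.
elim: k => [|k IH]; first by rewrite big_ord0 expr0.
by rewrite big_ord_recr /= IH exprSr.
Qed.

Lemma rpow_powl a y k : Rle 0 a -> Rle 0 y -> (rpow a y) ^+ k = rpow a (Rmult y (INR k)).
Proof.
move=> a0 y0.
case: (Req_dec a 0) => [->|an].
  case: (Req_dec y 0) => [->|yn].
    by rewrite Rmult_0_l !rpow_y0 expr1n.
  case: k => [|k].
    by rewrite expr0 Rmult_0_r rpow_y0.
  rewrite rpow_0x // expr0n rpow_0x //.
  rewrite S_INR; have := pos_INR k; nra.
rewrite !rpow_nz // -Rpower_mult Rpower_pow ?exprE //; exact: exp_pos.
Qed.

Lemma vnorm_e p (a : nat -> R) : (0 < p)%N -> vnorm (rdiag p 1 a) = sqrt (a 0%N * a 0%N).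
Proof.
move=> p0; rewrite /vnorm (bigD1 (Ordinal p0)) //= big1 ?addr0.
  by rewrite !mxE /= expr2.
move=> i hi; rewrite !mxE; case: eqP => e; last by rewrite expr2 mul0r.
by exfalso; move/eqP: hi; apply; apply: val_inj; rewrite /= e.
Qed.

Unset Implicit Arguments.
Theorem lemma7 (m n : nat) (A : 'M[R]_(m, n)) (mu nu : R) (sigma : nat -> R) :
  Rle 0 mu -> Rle 0 nu ->
  singular_values A sigma ->
  let l := minn m n in
  let r := \rank A in
  let Astar := damped_pinv A (lambda_of A mu nu) in
  let M1 := if A == 0 then 0 else Rinv (sigma r.-1) in
  let M2 := Rmult (Rinv (Rmult 2 mu)) (\prod_(i < l) rpow (sigma i) nu) in
  Rle (spec_norm Astar) (if mu == 0 then M1 else Rmin M1 M2) /\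
  (Rlt 0 mu ->
     Rle (spec_norm Astar)
         (Rmult (Rinv (Rmult 2 mu)) (rpow (spec_norm A) (Rmult nu (INR l))))).
Proof.
move=> mu0 nu0 [hs0 hmono [U [V [hU hV hA]]]] l r Astar M1 M2.
have hA' : A = U *m rdiag m n sigma *m V^T by [].
pose p := find (fun k => sigma k == 0) (iota 0 l).
have hpl : (p <= l)%N.
  by have := find_size (fun k => sigma k == 0) (iota 0 l); rewrite size_iota.
have hnz : forall k, (k < p)%N -> sigma k <> 0.
  move=> k kp; have := before_find 0%N kp.
  rewrite nth_iota ?add0n; last exact: leq_trans kp hpl.
  by move=> /negbT /eqP.
have hz : forall k, (p <= k)%N -> (k < l)%N -> sigma k = 0.
  move=> k pk kl.
  have hh : has (fun k => sigma k == 0) (iota 0 l).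
    by rewrite has_find size_iota; exact: leq_ltn_trans pk kl.
  have := nth_find 0%N hh; rewrite nth_iota ?add0n; last exact: leq_ltn_trans pk kl.
  move/eqP => h0; have ep : sigma p = 0 by exact: h0.
  have := hmono _ _ pk kl; have := hs0 _ kl; move: ep.
  toR => *; lra.
have hpos : forall k, (k < p)%N -> Rlt 0 (sigma k).
  move=> k kp; have := hs0 k (leq_trans kp hpl); have := hnz k kp; toR => *; lra.
have hr : r = p.
  rewrite /r hA' mxrankMfree; last first.
    by rewrite row_free_unit unitmx_tr; case: (mulmx1_unit hV).
  rewrite mxrank_unitl; last by case: (mulmx1_unit hU).
  apply: rank_rdiag => //.
  by move=> k kp; apply/eqP; apply: hnz.
have hM1ge0 : Rle 0 M1.
  rewrite /M1; case: eqP => hA0; first by toR; lra.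
  have : (0 < r)%N by rewrite lt0n mxrank_eq0; apply/eqP.
  rewrite hr => p0; left; apply: Rinv_0_lt_compat; apply: hpos.
  by rewrite prednK.
have hM1k : forall k, (k < l)%N -> Rlt 0 (sigma k) -> Rle (Rinv (sigma k)) M1.
  move=> k kl sk.
  have kp : (k < p)%N.
    rewrite ltnNge; apply/negP => pk; move: sk; rewrite hz //; toR; lra.
  have hA0 : A != 0.
    apply/negP => /eqP hA0; move: kp; by rewrite -hr /r hA0 mxrank0.
  rewrite /M1 (negbTE hA0).
  apply: Rinv_le_contravar; first by apply: hpos; rewrite hr prednK //; exact: leq_ltn_trans kp.
  apply: hmono; first by rewrite hr -ltnS prednK //; exact: leq_ltn_trans kp.
  rewrite hr; apply: leq_trans hpl; rewrite prednK //; exact: leq_ltn_trans kp.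
have hM2ge0 : Rlt 0 mu -> Rle 0 M2.
  move=> mp; rewrite /M2; apply: Rmult_le_pos.
    left; apply: Rinv_0_lt_compat; lra.
  apply: prod_ge0 => i; exact: rpow_ge0.
have hentM1 : forall (L : R) k, (k < l)%N ->
    Rle (sigma k * (sigma k * sigma k + L ^+ 2)^-1) M1.
  move=> L k kl; case: (Req_dec (sigma k) 0) => [->|sk].
    by rewrite mul0r; toR; lra.
  have sk' : Rlt 0 (sigma k) by have := hs0 k kl; lra.
  apply: Rle_trans (hM1k k kl sk'); rewrite expr2; toR.
  apply: entry_le_inv => //; nra.
have hbound : forall L (c : R), Rle 0 c ->
    (forall k, (k < l)%N -> Rle (sigma k * (sigma k * sigma k + L ^+ 2)^-1) c) ->
    Rle (spec_norm (damped_pinv A (Fin L))) c.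
  move=> L c c0 hc; rewrite /damped_pinv hA' svd_damped //.
  apply: spec_norm_le => x hx; apply: orth_rdiag_bound => // k kl.
  rewrite minnC in kl; move: (kl); rewrite leq_min => /andP [km kn].
  rewrite km /gsq kn; apply: sq_le; last exact: hc.
  rewrite expr2; toR; apply: entry_ge0; [exact: hs0 | nra].
have hInf : forall c, Rle 0 c -> Rle (spec_norm (damped_pinv A Inf)) c.
  move=> c c0; apply: spec_norm_le => x _; rewrite /= mul0mx vnorm0 //.
have hq : forall d, d = rpow (\det (A *m A^T)) nu -> Rlt 0 d ->
    Rle (sqrt d) (\prod_(i < l) rpow (sigma i) nu).
  move=> d -> hd.
  case: (Req_dec nu 0) => [hnu|hnu].
    rewrite hnu rpow_y0 sqrt_1 big1; first by toR; lra.
    by move=> i _; rewrite rpow_y0.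
  move: hd; rewrite hA' svd_det // => hd.
  have hdet : \prod_(i < m) gsq n sigma i != 0.
    apply/eqP => h0; move: hd; rewrite h0 rpow_0x //; lra.
  have hg := prodf_neq0 _ _ hdet.
  have hmn : (m <= n)%N.
    rewrite leqNgt; apply/negP => nm.
    by have := hg (Ordinal nm) isT; rewrite /gsq /= ltnn eqxx.
  have el : l = m by rewrite /l; apply/minn_idPl.
  have hsp : forall i : 'I_m, Rlt 0 (sigma i).
    move=> i; have := hg i isT; rewrite /gsq (leq_trans (ltn_ord i) hmn) => hi.
    have : sigma i != 0 by apply: contraNneq hi => ->; rewrite mul0r.
    move/eqP => hi'; have := hs0 i; rewrite -/l el ltn_ord => /(_ isT) h.
    move: hi' h; toR => *; lra.
  rewrite (eq_bigr (fun i : 'I_m => sigma i * sigma i)); last first.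
    by move=> i _; rewrite /gsq (leq_trans (ltn_ord i) hmn).
  rewrite rpow_nz; last first.
    apply/eqP; apply/prodf_neq0 => i _; apply/eqP; have := hsp i; toR; nra.
  rewrite Rpower_prod; last by move=> i; have := hsp i; toR; nra.
  rewrite (eq_bigr (fun i : 'I_m => Rpower (sigma i) nu * Rpower (sigma i) nu)); last first.
    by move=> i _; rewrite -Rpower_mult_distr //; exact: hsp.
  rewrite big_split /= sqrt_square; last by apply: prod_ge0 => i; left; exact: exp_pos.
  rewrite /l (minn_idPl hmn); right; apply: eq_bigr => i _; rewrite rpow_nz //.
  have := hsp i; lra.
have main : Rle (spec_norm Astar) (if mu == 0 then M1 else Rmin M1 M2).
  rewrite /Astar /lambda_of; case: (mu =P 0) => hmu.
    apply: hbound => // k kl; exact: hentM1.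
  have mp : Rlt 0 mu by move: hmu; toR => *; lra.
  have hc0 : Rle 0 (Rmin M1 M2) by apply: Rmin_glb => //; exact: hM2ge0.
  case: Rlt_dec => hd; last exact: hInf.
  apply: hbound => // k kl; apply: Rmin_glb; first exact: hentM1.
  set d := rpow _ nu in hd *.
  have hqd := hq d erefl hd.
  set q := sqrt d.
  have q0 : Rlt 0 q by apply: sqrt_lt_R0.
  have ht : sqrt (Rdiv (mu ^+ 2) d) = Rdiv mu q.
    rewrite sqrt_div //; last by rewrite expr2; toR; nra.
    by rewrite expr2 sqrt_square.
  rewrite ht.
  have hsk := hs0 k kl.
  apply: Rle_trans (_ : Rle (Rinv (Rmult 2 (Rdiv mu q))) _).
    rewrite expr2; toR; apply: entry_le_half => //.
    apply: Rdiv_lt_0_compat => //.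
  have -> : Rinv (Rmult 2 (Rdiv mu q)) = Rmult (Rinv (Rmult 2 mu)) q.
    by field; split; lra.
  rewrite /M2; apply: Rmult_le_compat_l => //; left; apply: Rinv_0_lt_compat; lra.
split; first exact: main.
move=> mp.
have hmu : (mu == 0) = false by apply/eqP; move: mp; toR => *; lra.
move: main; rewrite hmu => main.
apply: Rle_trans main _; apply: Rle_trans (Rmin_r _ _) _.
rewrite /M2; apply: Rmult_le_compat_l; first by left; apply: Rinv_0_lt_compat; lra.
have bnd : forall x : 'cV_n, Rle (vnorm x) R1 -> Rle (vnorm (A *m x)) (Rabs (sigma 0%N)).
  rewrite hA'; apply: orth_rdiag_bound => //; first exact: Rabs_pos.
  move=> k kl; have l0 : (0 < l)%N by exact: leq_ltn_trans kl.
  rewrite Rabs_pos_eq; last exact: hs0.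
  apply: sq_le; [exact: hs0 | exact: hmono].
have a0 : Rle 0 (spec_norm A).
  have hx0 : Rle (vnorm (0:'cV[R]_n)) R1 by rewrite vnorm0; lra.
  have := spec_norm_ge bnd hx0; rewrite mulmx0 vnorm0; toR => *; lra.
have ha : forall i, (i < l)%N -> Rle (sigma i) (spec_norm A).
  move=> i il; have l0 : (0 < l)%N by exact: leq_ltn_trans il.
  apply: Rle_trans (hmono _ _ (leq0n i) il) _.
  move: (l0); rewrite /l leq_min => /andP [m0 n0].
  have hx : Rle (vnorm (V *m rdiag n 1 (fun _ => 1))) R1.
    rewrite vnorm_orth // vnorm_e //; toR; rewrite Rmult_1_r; rewrite sqrt_1; lra.
  have := spec_norm_ge bnd hx.
  have -> : vnorm (A *m (V *m rdiag n 1 (fun _ => 1))) = sigma 0%N.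
    rewrite hA' -!mulmxA (mulmxA V^T V) hV mul1mx vnorm_orth // rdiag_mul vnorm_e //.
    rewrite n0 mulr1 sqrt_square //; exact: hs0 _ l0.
  done.
apply: Rle_trans (_ : Rle _ (\prod_(i < l) rpow (spec_norm A) nu)) _.
  apply: prod_le => i; split; first exact: rpow_ge0.
  apply: rpow_mono => //; [exact: hs0 | exact: ha].
rewrite prod_const rpow_powl //; exact: Rle_refl.
Qed.
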